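(* Let $D$ be the commutative unital ring of diagonal $2\times2$ matrices with entries in $\mathbb{Z}/2\mathbb{Z}$, and let $B=\begin{pmatrix}1&0\\0&0\end{pmatrix}$, $C=\begin{pmatrix}0&0\\0&1\end{pmatrix}$. The irreducible $\lambda$-quiddities over $D$ are exactly, up to cyclic permutation: - $(\mathrm{Id},\mathrm{Id},\mathrm{Id})$; - $(B,C,B,C)$, $(B,0,B,0)$, $(C,0,C,0)$, $(0,0,0,0)$; - $(B,B,B,B,B,B)$ and $(C,C,C,C,C,C)$.
   Context: For $a_1,\ldots,a_n$ in a commutative unital ring $A$ (with unit $1$), $M_n(a_1,\ldots,a_n)=\begin{pmatrix}a_n&-1\\1&0\end{pmatrix}\cdots\begin{pmatrix}a_1&-1\\1&0\end{pmatrix}$ (a $2\times2$ matrix over $A$). An $n$-tuple $(a_1,\ldots,a_n)\in A^n$ is a $\lambda$-quiddity over $A$ if $M_n(a_1,\ldots,a_n)=\pm\mathrm{Id}$. For $(a_1,\ldots,a_n)\in A^n$, $(b_1,\ldots,b_m)\in A^m$, define $(a_1,\ldots,a_n)\oplus(b_1,\ldots,b_m)=(a_1+b_m,a_2,\ldots,a_{n-1},a_n+b_1,b_2,\ldots,b_{m-1})$. Write $(a_1,\ldots,a_n)\sim(b_1,\ldots,b_n)$ if $(b_1,\ldots,b_n)$ is obtained from $(a_1,\ldots,a_n)$ or from $(a_n,\ldots,a_1)$ by a cyclic permutation. A $\lambda$-quiddity $(c_1,\ldots,c_n)$ with $n\ge3$ is reducible if there exist a $\lambda$-quiddity $(b_1,\ldots,b_l)$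 and a tuple $(a_1,\ldots,a_m)$ with $l,m\ge3$ and $(c_1,\ldots,c_n)\sim(a_1,\ldots,a_m)\oplus(b_1,\ldots,b_l)$; it is irreducible otherwise (by convention $(0,0)$ is reducible). *)

(* Defs.v *)
From HB Require Import structures.
From mathcomp Require Import all_boot all_order all_algebra.
Set Implicit Arguments. Unset Strict Implicit. Unset Printing Implicit Defensive.
Import GRing.Theory.
Local Open Scope ring_scope.

Section Quiddity.
Variable A : comNzRingType.

Definition Mat1 (a : A) : 'M[A]_2 :=
  \matrix_(i < 2, j < 2)
    (if (i == 0 :> nat) && (j == 0 :> nat) then a
     else if (i == 0 :> nat) then -1
     else if (j == 0 :> nat) then 1 else 0).

(* M_n(a_1,...,a_n) = Mat1 a_n * ... * Mat1 a_1, for s = [:: a_1; ...; a_n] *)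
Definition Mq (s : seq A) : 'M[A]_2 := foldr (fun a M => M *m Mat1 a) 1%:M s.

Definition lambda_quiddity (s : seq A) : Prop := Mq s = 1%:M \/ Mq s = - 1%:M.

(* (a_1..a_n) (+) (b_1..b_m) = (a_1+b_m, a_2..a_{n-1}, a_n+b_1, b_2..b_{m-1}) *)
Definition qoplus (a b : seq A) : seq A :=
  let n := size a in let m := size b in
  (nth 0 a 0 + nth 0 b m.-1) :: take (n - 2) (drop 1 a)
    ++ (nth 0 a n.-1 + nth 0 b 0) :: take (m - 2) (drop 1 b).

Definition qequiv (a b : seq A) : Prop :=
  exists k, b = rot k a \/ b = rot k (rev a).

Definition reducible (c : seq A) : Prop :=
  (3 <= size c)%N /\
  exists (a b : seq A), lambda_quiddity b /\ (3 <= size b)%N /\ (3 <= size a)%N /\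
    qequiv c (qoplus a b).

Definition irreducible (c : seq A) : Prop :=
  lambda_quiddity c /\ (3 <= size c)%N /\ ~ reducible c.
End Quiddity.

(* D = diagonal 2x2 matrices over Z/2Z, represented by their diagonal:
   (x, y) stands for diag(x, y); ring operations are componentwise. *)
Definition D : comNzRingType := ('F_2 * 'F_2)%type.
Definition DId : D := (1, 1).
Definition DB : D := (1, 0).
Definition DC : D := (0, 1).
Definition D0 : D := (0, 0).

(* Main.v *)
Require Import Defs.
From mathcomp Require Import all_boot all_order all_algebra zify.
From Stdlib Require Import Lia.
Import GRing.Theory.

Section Part_S1.
Local Open Scope ring_scope.

Definition v4 := (D * D * D * D)%type.
Fixpoint mq (s : seq D) : v4 :=
  match s with
  | [::] => (1, 0, 0, 1)
  | a :: s' => let: (p, q, r, t) := mq s' in (p * a + q, - p, r * a + t, - r)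
  end.
Definition tomx (v : v4) : 'M[D]_2 :=
  let: (p, q, r, t) := v in
  \matrix_(i < 2, j < 2) (if i == 0 :> nat then (if j == 0 :> nat then p else q)
                           else (if j == 0 :> nat then r else t)).

Lemma MqE s : Mq s = tomx (mq s).
Proof.
elim: s => [|a s IH].
  apply/matrixP => i j; rewrite !mxE.
  by case: i => [[|[|//]] ?]; case: j => [[|[|//]] ?].
rewrite /Mq /= -/(Mq s) IH.
case: (mq s) => [[[p q] r] t] /=.
apply/matrixP => i j; rewrite !mxE !big_ord_recl big_ord0 !mxE.
case: i => [[|[|//]] ?]; case: j => [[|[|//]] ?] /=;
  by rewrite ?mulr1 ?mulr0 ?addr0 ?mulrN1.
Qed.

Lemma DN1 : (-1 : D) = 1. Proof. by apply/eqP. Qed.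

Definition qf (s : seq D) : bool := mq s == (1, 0, 0, 1).

Lemma lqP s : lambda_quiddity s <-> qf s.
Proof.
rewrite /lambda_quiddity /qf MqE; case: (mq s) => [[[p q] r] t] /=.
split.
  case=> H;
  have h00 := congr1 (fun M : 'M[D]_2 => M ord0 ord0) H;
  have h01 := congr1 (fun M : 'M[D]_2 => M ord0 ord_max) H;
  have h10 := congr1 (fun M : 'M[D]_2 => M ord_max ord0) H;
  have h11 := congr1 (fun M : 'M[D]_2 => M ord_max ord_max) H;
  move: h00 h01 h10 h11; rewrite /= !mxE /= => -> -> -> ->;
  by rewrite ?oppr0 ?DN1.
move/eqP => [-> -> -> ->]; left.
apply/matrixP => i j; rewrite !mxE.
by case: i => [[|[|//]] ?]; case: j => [[|[|//]] ?].
Qed.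

Definition Dl : seq D := [:: D0; DB; DC; DId].
Lemma memDl x : x \in Dl.
Proof.
by case: x => [[[|[|//]] ?] [[|[|//]] ?]].
Qed.

End Part_S1.
Section Part_S2.
Local Open Scope nat_scope.
Arguments D : simpl never.

Lemma split3 (t : seq D) : (3 <= size t)%N ->
  exists v0 v1 v, t = v0 :: v ++ [:: v1] /\ (1 <= size v)%N.
Proof.
case: t => [|v0 t] //= Ht.
case/lastP: t Ht => [|v v1] //; rewrite size_rcons => Hs.
by exists v0, v1, v; rewrite cats1.
Qed.

Lemma sizeb (w : seq D) x y : size (x :: w ++ [:: y]) = (size w).+2.
Proof. by rewrite /= size_cat addn1. Qed.

Lemma red_win c k v0 v1 v w x y :
  rot k c = v0 :: v ++ v1 :: w -> (1 <= size v)%N -> (1 <= size w)%N ->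
  qf (x :: w ++ [:: y]) -> reducible c.
Proof.
move=> Hc Hv Hw Hq.
have Hsz : size c = (size v + size w + 2)%N.
  by rewrite -(size_rot k) Hc /= size_cat /=; lia.
split; first by rewrite Hsz; lia.
have Hb3 : 3 <= size (x :: w ++ [:: y]) by rewrite sizeb.
have Ha3 : 3 <= size ((v0 - y)%R :: v ++ [:: (v1 - x)%R]) by rewrite sizeb.
exists ((v0 - y)%R :: v ++ [:: (v1 - x)%R]), (x :: w ++ [:: y]).
split; first by apply/lqP.
split; first exact: Hb3.
split; first exact: Ha3.
exists k; left; rewrite Hc /qoplus.
rewrite /= !size_cat /= !addn1 !subSS !subn0.
rewrite !drop0 /= !nth_cat !ltnn !subnn /=.
rewrite !take_size_cat // subrK.
by rewrite subrK.
Qed.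

Lemma red_rot c k u w x y :
  rot k c = u ++ w -> (3 <= size u)%N -> (1 <= size w)%N ->
  qf (x :: w ++ [:: y]) -> reducible c.
Proof.
move=> Hc Hu Hw Hq; have [v0 [v1 [v [Eu Hv]]]] := split3 u Hu.
apply: (red_win c k v0 v1 v w x y _ Hv Hw Hq).
by rewrite Hc Eu /= -catA.
Qed.

Lemma red_at c i m x y :
  (i + m <= size c)%N -> (3 <= size c - m)%N -> (1 <= m)%N ->
  qf (x :: take m (drop i c) ++ [:: y]) -> reducible c.
Proof.
move=> Him Hs Hm Hq.
apply: (red_rot c (i + m) (drop (i + m) c ++ take i c) (take m (drop i c)) x y) => //.
- by rewrite /rot takeD catA.
- rewrite size_cat size_drop size_take; case: ifP => _; lia.
- rewrite size_take size_drop; case: ifP => _; lia.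
Qed.

End Part_S2.
Section Part_S3.
Local Open Scope nat_scope.

Definition nowin (s : seq D) : bool :=
  all (fun j => all (fun m => all (fun x => all (fun y =>
     ~~ qf (x :: drop (size s - m) (rot j s) ++ [:: y])) Dl) Dl)
     (iota 1 (size s - 3))) (iota 0 (size s)).

Lemma bdecomp (b : seq D) : 2 <= size b ->
  b = nth 0%R b 0 :: take (size b - 2) (drop 1 b) ++ [:: nth 0%R b (size b).-1].
Proof.
case: b => [|x [|y t]] // _.
have [u [z E]] : exists u z, y :: t = rcons u z.
  by exists (belast y t), (last y t); rewrite lastI.
rewrite E /= drop0 size_rcons subSS subn1 /= -cats1 take_size_cat //.
by rewrite nth_cat ltnn subnn.
Qed.

Lemma nowin_false (s a b : seq D) k :
  qf b -> 3 <= size b -> 3 <= size a -> qoplus a b = rot k s -> nowin s -> False.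
Proof.
move=> Hq Hb Ha Hk /allP Hn.
pose j := if k < size s then k else 0.
have Hj : j \in iota 0 (size s).
  rewrite mem_iota /j; case: ifP => //= _.
  by rewrite -(size_rot k) -Hk /qoplus /=.
have Erot : rot j s = rot k s.
  rewrite /j; case: ltnP => // H; by rewrite rot0 rot_oversize.
have Hsa : size (take (size a - 2) (drop 1 a)) = size a - 2.
  rewrite size_take size_drop; case: ltnP => H; lia.
have Hsb : size (take (size b - 2) (drop 1 b)) = size b - 2.
  rewrite size_take size_drop; case: ltnP => ?; lia.
have Hss : size s = size a + size b - 2.
  rewrite -(size_rot k) -Hk /qoplus /= size_cat /= Hsa Hsb; set na := size a; set nb := size b; lia.
have Hm : size b - 2 \in iota 1 (size s - 3) by rewrite mem_iota; lia.
have := allP (allP (Hn j Hj) _ Hm) _ (memDl (nth 0%R b 0)).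
move/allP/(_ _ (memDl (nth 0%R b (size b).-1))); apply/negP/negPn.
rewrite Erot -Hk.
have -> : size s - (size b - 2) = size (take (size a - 2) (drop 1 a)) + 2 by rewrite Hsa; lia.
rewrite /qoplus.
have Ed : forall (z0 z1 : D) A W, drop (size A + 2) (z0 :: A ++ z1 :: W) = W.
  move=> z0 z1 A W; rewrite (_ : z0 :: A ++ z1 :: W = (z0 :: A ++ [:: z1]) ++ W).
    by rewrite drop_size_cat //= size_cat /= addn1 addn2.
  by rewrite /= -catA.
rewrite Ed -bdecomp //; set nb := size b; lia.
Qed.

Lemma nowin_irr (c : seq D) : nowin c -> nowin (rev c) -> ~ reducible c.
Proof.
move=> H1 H2 [_ [a [b [/lqP Hq [Hb [Ha [k [E|E]]]]]]]].
  exact: (nowin_false c a b k Hq Hb Ha E H1).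
exact: (nowin_false (rev c) a b k Hq Hb Ha E H2).
Qed.

End Part_S3.
Section Part_S4.
Local Open Scope nat_scope.

Definition L1 : seq D := [:: DId; DId; DId].
Definition L2 : seq D := [:: DB; DC; DB; DC].
Definition L3 : seq D := [:: DB; D0; DB; D0].
Definition L4 : seq D := [:: DC; D0; DC; D0].
Definition L5 : seq D := [:: D0; D0; D0; D0].
Definition L6 : seq D := [:: DB; DB; DB; DB; DB; DB].
Definition L7 : seq D := [:: DC; DC; DC; DC; DC; DC].

Definition inl (s : seq D) : bool :=
  has (fun k => [|| s == rot k L1, s == rot k L2, s == rot k L3, s == rot k L4,
                    s == rot k L5, s == rot k L6 | s == rot k L7]) (iota 0 6).

Lemma inlP s : inl s -> exists k, s = rot k L1 \/ s = rot k L2 \/ s = rot k L3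
   \/ s = rot k L4 \/ s = rot k L5 \/ s = rot k L6 \/ s = rot k L7.
Proof.
case/hasP=> k _ H; exists k.
repeat match goal with
 | H : is_true (_ || _) |- _ => case/orP: H => H
end; move/eqP: H => ->; do ?[by left | right]; done.
Qed.

Definition good (s : seq D) : bool := qf s && nowin s && nowin (rev s).

Lemma good_irr s : good s -> 3 <= size s -> irreducible s.
Proof.
case/andP=> /andP[Hq H1] H2 Hs; split; first by apply/lqP.
split => //; exact: nowin_irr.
Qed.

Lemma rot_all (P : seq D -> Prop) L k : 0 < size L ->
  (forall j, j < size L -> P (rot j L)) -> P (rot k L).
Proof.
move=> HL H; case: (ltnP k (size L)) => Hk; first exact: H.
by rewrite rot_oversize //; have := H 0 HL; rewrite rot0.
Qed.

Lemma allgood L : 3 <= size L -> all (fun j => good (rot j L)) (iota 0 (size L)) ->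
  forall k, irreducible (rot k L).
Proof.
move=> HL /allP H k; apply: rot_all; first by apply: leq_trans HL.
move=> j Hj; apply: good_irr; last by rewrite size_rot.
by apply: H; rewrite mem_iota.
Qed.

Lemma back c : (exists k, c = rot k L1 \/ c = rot k L2 \/ c = rot k L3
   \/ c = rot k L4 \/ c = rot k L5 \/ c = rot k L6 \/ c = rot k L7) -> irreducible c.
Proof.
case=> k; case=> [->|[->|[->|[->|[->|[->|->]]]]]]; (apply: allgood; [by [] | by vm_compute]).
Qed.

End Part_S4.
Section Part_S5.
Local Open Scope nat_scope.

Definition chk3 : bool := all (fun x1 => all (fun x2 => all (fun x3 =>
  qf [:: x1; x2; x3] ==> inl [:: x1; x2; x3]) Dl) Dl) Dl.
Definition chk4 : bool := all (fun x1 => all (fun x2 => all (fun x3 => all (fun x4 =>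
  qf [:: x1; x2; x3; x4] ==> (DId \in [:: x1; x2; x3; x4]) || inl [:: x1; x2; x3; x4])
  Dl) Dl) Dl) Dl.
Definition chkpair : bool := all (fun u => all (fun v =>
  (u * v == 0)%R ==> has (fun x => has (fun y => qf [:: x; u; v; y]) Dl) Dl) Dl) Dl.
Definition chkC : bool := all (fun u => all (fun v =>
  (u != DId) ==> (v != DId) ==> (u * v != 0)%R ==> (u == v) && ((u == DB) || (u == DC))) Dl) Dl.
Definition chkN : bool := [&& ~~ qf (nseq 5 DB), ~~ qf (nseq 5 DC),
  inl (nseq 6 DB) & inl (nseq 6 DC)].
Lemma qf6B : qf (nseq 6 DB). Proof. by vm_compute. Qed.
Lemma qf6C : qf (nseq 6 DC). Proof. by vm_compute. Qed.

Lemma chk3T : chk3. Proof. by vm_compute. Qed.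
Lemma chk4T : chk4. Proof. by vm_compute. Qed.
Lemma chkpairT : chkpair. Proof. by vm_compute. Qed.
Lemma chkCT : chkC. Proof. by vm_compute. Qed.
Lemma chkNT : chkN. Proof. by vm_compute. Qed.
Lemma qfId : qf [:: DId; DId; DId]. Proof. by vm_compute. Qed.

Lemma fwd c : irreducible c -> inl c.
Proof.
move=> [/lqP Hq [Hs Hnr]].
have Hid : 4 <= size c -> DId \notin c.
  move=> H4; apply/negP => Hin; apply: Hnr.
  apply: (red_at c (index DId c) 1 DId DId).
  - by rewrite addn1 index_mem.
  - lia.
  - by [].
  - by rewrite (drop_nth 0%R) ?index_mem // nth_index //= take0 qfId.
case: (ltnP (size c) 4) => H4.
  case: c Hq Hs H4 {Hid Hnr} => [|x1 [|x2 [|x3 [|x4 t]]]] //= Hq _ _.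
  have := allP (allP (allP chk3T _ (memDl x1)) _ (memDl x2)) _ (memDl x3).
  by rewrite Hq.
case: (ltnP (size c) 5) => H5.
  have := Hid H4; case: c Hq Hs H4 H5 {Hid Hnr} => [|x1 [|x2 [|x3 [|x4 [|x5 t]]]]] //= Hq _ _ _ Hn.
  have := allP (allP (allP (allP chk4T _ (memDl x1)) _ (memDl x2)) _ (memDl x3)) _ (memDl x4).
  by rewrite Hq (negbTE Hn).
have Hn := Hid H4.
have Hpair : forall i, i.+1 < size c -> (nth 0%R c i * nth 0%R c i.+1 != 0)%R.
  move=> i Hi; apply/negP => H0; apply: Hnr.
  have := allP (allP chkpairT _ (memDl (nth 0%R c i))) _ (memDl (nth 0%R c i.+1)).
  rewrite H0 implyTb => /hasP[x _ /hasP[y _ Hxy]].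
  apply: (red_at c i 2 x y) => //; try lia.
  have Ew : take 2 (drop i c) = [:: nth 0%R c i; nth 0%R c i.+1].
    by rewrite (drop_nth 0%R) ?(ltnW Hi) // (drop_nth 0%R) //= take0.
  by rewrite Ew.
have Hnid : forall i, i < size c -> nth 0%R c i != DId.
  move=> i Hi; apply/negP => /eqP E; move/negP: Hn; apply; rewrite -E.
  exact: mem_nth.
have Hconst : forall i, i < size c ->
    nth 0%R c i = nth 0%R c 0 /\ ((nth 0%R c 0 == DB) || (nth 0%R c 0 == DC)).
  elim=> [|i IH] Hi.
    have := allP (allP chkCT _ (memDl (nth 0%R c 0))) _ (memDl (nth 0%R c 1)).
    rewrite Hnid // Hnid; last lia.
    by rewrite Hpair ?implyTb; [case/andP => _ -> | lia].
  have [IH1 IH2] := IH (ltnW Hi); split => //.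
  have := allP (allP chkCT _ (memDl (nth 0%R c i))) _ (memDl (nth 0%R c i.+1)).
  rewrite Hnid ?Hnid ?Hpair ?implyTb; try lia.
  by case/andP => /eqP <-.
have Ec : c = nseq (size c) (nth 0%R c 0).
  apply: (eq_from_nth (x0 := 0%R)); first by rewrite size_nseq.
  move=> i Hi; rewrite nth_nseq Hi; exact: (Hconst i Hi).1.
have Hd := (Hconst 0 (leq_trans (isT : 0 < 4) H4)).2.
move: Hq Hnr; rewrite Ec; move: (nth 0%R c 0) Hd (size c) H5 => d Hd N HN {Ec Hconst Hnid Hpair Hn Hid H4 Hs c}.
have /and4P[Nb1 Nc1 Ib Ic] := chkNT.
case: (ltnP N 7) => H7.
  have [->|->] : N = 5 \/ N = 6 by lia.
    by case/orP: Hd => /eqP ->; rewrite ?(negbTE Nb1) ?(negbTE Nc1).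
  by case/orP: Hd => /eqP ->.
move=> _ Hnr; exfalso; apply: Hnr.
apply: (red_at _ 0 4 d d); rewrite ?size_nseq //; try lia.
rewrite drop0 take_nseq; last lia.
by case/orP: Hd => /eqP ->; [exact: qf6B | exact: qf6C].
Qed.

End Part_S5.
Local Open Scope ring_scope.

Theorem proposition3p6 (c : seq D) :
  irreducible c <->
  exists k, c = rot k [:: DId; DId; DId]
         \/ c = rot k [:: DB; DC; DB; DC]
         \/ c = rot k [:: DB; D0; DB; D0]
         \/ c = rot k [:: DC; D0; DC; D0]
         \/ c = rot k [:: D0; D0; D0; D0]
         \/ c = rot k [:: DB; DB; DB; DB; DB; DB]
         \/ c = rot k [:: DC; DC; DC; DC; DC; DC].
Proof.
split => [H | H]; [exact (inlP _ (fwd _ H)) | exact (back _ H)].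
Qed.
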